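(* Let $p$ be a prime, $\mathbb{C}_p$ the field of complex $p$-adic numbers with norm $|\cdot|_p$, $a,b,c\in\mathbb{C}_p$ with $b\neq0$, $c\neq ab$, $f(x)=\frac{x+a}{bx+c}$ for $x\neq -c/b$. Fix a square root $\sqrt{(c-1)^2+4ab}$ and let $x_{1}=\frac{1-c+\sqrt{(c-1)^2+4ab}}{2b}$ (a fixed point of $f$). Assume $$\left|\frac{c-ab}{(bx_1+c)^2}\right|_p<1\qquad\text{and}\qquad\left|\frac{b}{bx_1+c}\right|_p<1,$$ and put $\delta_2=\left|\frac{bx_1+c}{b}\right|_p-1$. Then $$\bigcup_{\delta\ge 0,\ \delta\neq 1+\delta_2} S_\delta(x_1)\subset A(x_1).$$
   Context: $S_\delta(x_1)=\{x\in\mathbb{C}_p:|x-x_1|_p=\delta\}$ (so $S_0(x_1)=\{x_1\}$). The basin of attraction of a fixed point $x_0$ is $A(x_0)=\{y\in\mathbb{C}_p: f^n(y)\to x_0 \text{ as } n\to\infty\}$. *)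

(* Defs.v *)
From mathcomp Require Import all_boot all_order all_algebra.
From mathcomp Require Import reals.
Set Implicit Arguments. Unset Strict Implicit. Unset Printing Implicit Defensive.
Import Order.TTheory GRing.Theory Num.Theory.
Local Open Scope ring_scope.

(* A model of the complex p-adic numbers C_p: an algebraically closed field K
   with a real-valued absolute value nrm which is non-archimedean, normalized
   by |p| = 1/p (so it restricts to the p-adic absolute value on Q), complete,
   of characteristic 0, and in which the algebraic closure of Q is dense.
   These properties characterize C_p (= completion of the algebraic closure of
   Q_p) up to isometric isomorphism. *)

Definition cauchy_seq (R : realType) (K : fieldType) (nrm : K -> R)
  (u : nat -> K) : Prop :=
  forall eps : R, 0 < eps -> exists N : nat,
    forall m n : nat, (N <= m)%N -> (N <= n)%N -> nrm (u m - u n) < eps.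

Definition seq_cvg_to (R : realType) (K : fieldType) (nrm : K -> R)
  (u : nat -> K) (l : K) : Prop :=
  forall eps : R, 0 < eps -> exists N : nat,
    forall n : nat, (N <= n)%N -> nrm (u n - l) < eps.

Definition algebraic_over_Q (K : fieldType) (y : K) : Prop :=
  exists q : {poly rat}, q != 0 /\ root (map_poly ratr q) y.

Definition is_Cp (p : nat) (R : realType) (K : closedFieldType) (nrm : K -> R)
  : Prop :=
  (forall x : K, nrm x = 0 <-> x = 0) /\
      (forall x y : K, nrm (x * y) = nrm x * nrm y) /\
      (forall x y : K, nrm (x + y) <= Num.max (nrm x) (nrm y)) /\
      nrm (p%:R) = (p%:R)^-1 /\
      ([pchar K] =i pred0) /\
      (forall u : nat -> K, cauchy_seq nrm u -> exists l : K, seq_cvg_to nrm u l) /\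
    (forall (x : K) (eps : R), 0 < eps ->
         exists y : K, algebraic_over_Q y /\ nrm (x - y) < eps).

Definition mobius (K : fieldType) (a b c : K) (x : K) : K := (x + a) / (b * x + c).

Definition basin (R : realType) (K : fieldType) (nrm : K -> R) (a b c x0 y : K)
  : Prop :=
  (forall n : nat, b * iter n (mobius a b c) y + c != 0) /\
  seq_cvg_to nrm (fun n => iter n (mobius a b c) y) x0.

(* Main.v *)
Require Import Defs.
From mathcomp Require Import all_boot all_order all_algebra reals.
From mathcomp Require Import ring lra.
Import Order.TTheory GRing.Theory Num.Theory.
Local Open Scope ring_scope.
Set Implicit Arguments.

Lemma bern (R : realType) (h : R) (n : nat) : 0 <= h -> 1 + n%:R * h <= (1 + h) ^+ n.
Proof.
move=> h0; elim: n => [|n IH]; first by rewrite expr0 mul0r addr0.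
rewrite exprSr -natr1.
have hn : 0 <= n%:R * h :> R by rewrite mulr_ge0.
have: (1 + n%:R * h) * (1 + h) <= (1 + h) ^+ n * (1 + h).
  by rewrite ler_wpM2r // addr_ge0.
nra.
Qed.

Lemma geo (R : realType) (q C eps : R) : 0 <= q -> q < 1 -> 0 <= C -> 0 < eps ->
  exists N : nat, forall n : nat, (N <= n)%N -> q ^+ n * C < eps.
Proof.
move=> q0 q1 C0 e0.
suff [N HN] : exists N : nat, q ^+ N * C < eps.
  exists N => n Nn; apply: le_lt_trans HN.
  by rewrite ler_wpM2r // ler_wiXn2l // ltW.
have [->|qn0] := eqVneq q 0.
  by exists 1%N; rewrite expr1 mul0r.
have qp : 0 < q by rewrite lt_def qn0 q0.
set h := q^-1 - 1.
have hp : 0 < h by rewrite /h subr_gt0 invf_gt1.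
have x0 : 0 <= C / (eps * h) by rewrite divr_ge0 // ltW // mulr_gt0.
set N := Num.Def.archi_bound (C / (eps * h)).
have HN := archi_boundP x0; rewrite -/N in HN.
exists N.
have B := @bern R h N (ltW hp).
have e1 : q * (1 + h) = 1 by rewrite /h addrC subrK divff.
have e2 : q ^+ N * (1 + h) ^+ N = 1 by rewrite -exprMn e1 expr1n.
have qN0 : 0 <= q ^+ N by rewrite exprn_ge0.
have HN' : C < N%:R * (eps * h).
  by rewrite -ltr_pdivrMr ?mulr_gt0.
have : q ^+ N * C * (1 + N%:R * h) <= q ^+ N * C * (1 + h) ^+ N.
  by rewrite ler_wpM2l // mulr_ge0.
have -> : q ^+ N * C * (1 + h) ^+ N = C by rewrite mulrAC e2 mul1r.
have : 0 <= q ^+ N * C by rewrite mulr_ge0.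
set z := q ^+ N * C. set M := N%:R.
have M0 : 0 <= M by rewrite /M ler0n.
nra.
Qed.

Lemma nrm_ge0 {R : realType} {K : closedFieldType} {nrm : K -> R}
  (nM : forall x y : K, nrm (x * y) = nrm x * nrm y) x : 0 <= nrm x.
Proof.
have [y Hy] := @solve_monicpoly K 2 (fun i => if i == 0%N then x else 0) isT.
move: Hy; rewrite big_ord_recl big_ord1 /= expr0 mulr1 mul0r addr0 => <-.
by rewrite expr2 nM -expr2 sqr_ge0.
Qed.

Lemma nrm1 {R : realType} {K : closedFieldType} {nrm : K -> R}
  (n0 : forall x : K, nrm x = 0 <-> x = 0)
  (nM : forall x y : K, nrm (x * y) = nrm x * nrm y) : nrm 1 = 1.
Proof.
have h1 : nrm 1 != 0 by apply/eqP => /n0 /eqP; rewrite oner_eq0.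
apply: (mulfI h1); rewrite -nM !mulr1 //.
Qed.

Lemma nrmN {R : realType} {K : closedFieldType} {nrm : K -> R}
  (n0 : forall x : K, nrm x = 0 <-> x = 0)
  (nM : forall x y : K, nrm (x * y) = nrm x * nrm y) x : nrm (- x) = nrm x.
Proof.
have h : nrm (-1) = 1.
  have : nrm (-1) ^+ 2 == 1 by rewrite expr2 -nM mulrNN mulr1 nrm1.
  rewrite sqrf_eq1 => /orP [/eqP //|/eqP e].
  by have := nrm_ge0 nM (-1); rewrite e ler0N1.
by rewrite -mulN1r nM h mul1r.
Qed.

Lemma nrmV {R : realType} {K : closedFieldType} {nrm : K -> R}
  (n0 : forall x : K, nrm x = 0 <-> x = 0)
  (nM : forall x y : K, nrm (x * y) = nrm x * nrm y) x : nrm (x^-1) = (nrm x)^-1.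
Proof.
have [->|x0] := eqVneq x 0.
  by rewrite invr0 (proj2 (n0 0) erefl) invr0.
have nx : nrm x != 0 by apply/eqP => /n0 /eqP; rewrite (negbTE x0).
apply: (mulfI nx); rewrite -nM divff // divff // nrm1 //.
Qed.

Lemma nrm_ultra {R : realType} {K : closedFieldType} {nrm : K -> R}
  (n0 : forall x : K, nrm x = 0 <-> x = 0)
  (nM : forall x y : K, nrm (x * y) = nrm x * nrm y)
  (nD : forall x y : K, nrm (x + y) <= Num.max (nrm x) (nrm y)) x y :
  nrm y < nrm x -> nrm (x + y) = nrm x.
Proof.
move=> lt.
have h1 := nD x y.
have h2 := nD (x + y) (- y).
rewrite addrK nrmN // in h2.
move: h1 h2; rewrite (max_idPl (ltW lt)).
case: (leP (nrm (x + y)) (nrm y)) => H.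
  move=> _ H2; have := lt_le_trans lt H2; by rewrite ltxx.
move=> H1 H2; apply/eqP; rewrite eq_le H1 H2 //.
Qed.

Theorem theorem3p7 (p : nat) (R : realType) (K : closedFieldType) (nrm : K -> R)
  (hp : prime p) (hK : is_Cp p nrm)
  (a b c s : K) (hb : b != 0) (hc : c != a * b)
  (hs : s ^+ 2 = (c - 1) ^+ 2 + 4 * a * b) :
  let x1 := (1 - c + s) / (2 * b) in
  nrm ((c - a * b) / (b * x1 + c) ^+ 2) < 1 ->
  nrm (b / (b * x1 + c)) < 1 ->
  let delta2 := nrm ((b * x1 + c) / b) - 1 in
  forall (delta : R), 0 <= delta -> delta != 1 + delta2 ->
  forall x : K, nrm (x - x1) = delta -> basin nrm a b c x1 x.
Proof.
move: hK => [n0 [nM [nD [_ [hch _]]]]].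
move=> x1 hal hbe delta2 d d0 hd x hx.
have two : (2 : K) != 0.
  apply/negP => /eqP h2.
  have [q hq] := @natf0_pchar K 2 isT (introT eqP h2).
  by move: hq; rewrite hch.
have hfix : a = x1 * (b * x1 + c) - x1.
  have e : 4 * b * (x1 * (b * x1 + c) - x1 - a) = s ^+ 2 - (c - 1) ^+ 2 - 4 * a * b.
    by rewrite /x1; field; rewrite hb two.
  have {}e : 4 * b * (x1 * (b * x1 + c) - x1 - a) = 0 by rewrite e hs; ring.
  have : 4 * b != 0 :> K.
    by rewrite mulf_neq0 // (_ : 4 = 2 * 2 :> K) ?mulf_neq0 //; ring.
  move=> h4; move: e => /eqP; rewrite mulf_eq0 (negbTE h4) /= subr_eq0 => /eqP <- //.
set A := b * x1 + c.
have hA : A != 0.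
  apply/eqP => A0; move: hfix; rewrite -/A A0 mulr0 sub0r => ha.
  move: A0; rewrite /A (_ : x1 = - a); last by rewrite ha opprK.
  by move/eqP; rewrite mulrN addrC subr_eq0 mulrC (negbTE hc).
have key : forall y, b * y + c != 0 ->
    mobius a b c y - x1 = (c - a * b) / A * (y - x1) / (b * y + c).
  move=> y hy; rewrite /mobius /A hfix; field.
  by rewrite hy -/A hA.
have nge0 := nrm_ge0 nM.
have nA0 : 0 < nrm A by rewrite lt_def nge0 andbT; apply/eqP => /n0 /eqP; rewrite (negbTE hA).
have nb0 : 0 < nrm b by rewrite lt_def nge0 andbT; apply/eqP => /n0 /eqP; rewrite (negbTE hb).
set na := nrm ((c - a * b) / A ^+ 2).
have na0 : 0 <= na by apply: nge0.
have naE : na = nrm (c - a * b) / (nrm A * nrm A).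
  by rewrite /na nM expr2 (nrmV n0 nM) nM.
have step_in : forall y, nrm b * nrm (y - x1) < nrm A ->
    b * y + c != 0 /\ nrm (mobius a b c y - x1) = na * nrm (y - x1).
  move=> y hy.
  have e : nrm (b * y + c) = nrm A.
    rewrite (_ : b * y + c = A + b * (y - x1)); last by rewrite /A; ring.
    by apply: (nrm_ultra n0 nM nD); rewrite nM.
  have hy0 : b * y + c != 0.
    by apply/eqP => h; move: e; rewrite h (proj2 (n0 0) erefl) => h'; move: nA0; rewrite -h' ltxx.
  split => //; rewrite key // !nM !(nrmV n0 nM) e naE; field.
  by rewrite gt_eqF.
have step_out : forall y, nrm A < nrm b * nrm (y - x1) ->
    b * y + c != 0 /\ nrm b * nrm (mobius a b c y - x1) < nrm A.
  move=> y hy.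
  have ny0 : 0 < nrm (y - x1).
    rewrite lt_def nge0 andbT; apply/eqP => h; move: hy; rewrite h mulr0 => h'.
    by move: (lt_trans nA0 h'); rewrite ltxx.
  have e : nrm (b * y + c) = nrm b * nrm (y - x1).
    rewrite (_ : b * y + c = b * (y - x1) + A); last by rewrite /A; ring.
    by rewrite (nrm_ultra n0 nM nD) ?nM.
  have hy0 : b * y + c != 0.
    apply/eqP => h; move: e; rewrite h (proj2 (n0 0) erefl) => h'.
    by move: (mulr_gt0 nb0 ny0); rewrite -h' ltxx.
  split => //; rewrite key // !nM !(nrmV n0 nM) e.
  have -> : nrm b * (nrm (c - a * b) * (nrm A)^-1 * nrm (y - x1) * (nrm b * nrm (y - x1))^-1)
      = na * nrm A.
    by rewrite naE; field; rewrite !gt_eqF.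
  by rewrite -[ltRHS]mul1r ltr_pM2r.
set u := mobius a b c.
have na1 : na < 1 by [].
have inner : forall y, nrm b * nrm (y - x1) < nrm A -> forall n,
    [/\ b * iter n u y + c != 0, nrm (iter n u y - x1) <= na ^+ n * nrm (y - x1)
      & nrm b * nrm (iter n u y - x1) < nrm A].
  move=> y hy; elim => [|n [IH1 IH2 IH3]].
    by rewrite /= expr0 mul1r; split => //; case: (step_in y hy).
  have [_ e] := step_in _ IH3.
  have h3 : nrm b * nrm (iter n.+1 u y - x1) < nrm A.
    rewrite iterS e; apply: le_lt_trans IH3.
    rewrite ler_wpM2l ?(ltW nb0) // -[leRHS]mul1r ler_wpM2r ?nge0 // ltW //.
  split => //.
    by case: (step_in _ h3).
  rewrite iterS e exprS -mulrA ler_wpM2l //.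
have hd' : nrm b * d != nrm A.
  apply: contra hd => /eqP e; apply/eqP.
  rewrite /delta2 addrC subrK nM (nrmV n0 nM) -/A -e mulrC mulrA.
  by rewrite mulVf ?mul1r // gt_eqF.
case: (ltgtP (nrm b * d) (nrm A)) => H.
- rewrite -hx in H; split.
    by move=> n; case: (inner x H n).
  move=> eps e0; have [N HN] := @geo _ _ _ _ na0 na1 (nge0 (x - x1)) e0.
  exists N => n Nn; case: (inner x H n) => _ h _.
  exact: le_lt_trans h (HN n Nn).
- rewrite -hx in H; have [hx0 hux] := step_out x H; split.
    by case => [//|n]; rewrite iterSr; case: (inner _ hux n).
  move=> eps e0; have [N HN] := @geo _ _ _ _ na0 na1 (nge0 (u x - x1)) e0.
  exists N.+1 => [[//|n]] Nn; rewrite iterSr; case: (inner _ hux n) => _ h _.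
  exact: le_lt_trans h (HN n Nn).
- by move: hd'; rewrite H eqxx.
Qed.
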